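(* Let $I$ be a compact interval and $f:I\to\mathcal{K}(\mathbb{R})$ a continuous set-valued function such that $\dim_A(\mathcal{G}(f))>1$. Then $\dim_A\Delta(\mathcal{G}(f))=1$.
   Context: $\mathcal{K}(\mathbb{R})$: non-empty compact subsets of $\mathbb{R}$ with the Hausdorff distance. $\mathcal{G}(f)=\{(x,y)\in I\times\mathbb{R}:y\in f(x)\}\subseteq\mathbb{R}^2$, and $\Delta(\mathcal{G}(f))=\{|x-x_*|+|y-y_*|:x,x_*\in I,\ y\in f(x),\ y_*\in f(x_* )\}$. $\dim_A$ denotes Assouad dimension. *)

(* Defs.v *)
From Stdlib Require Import Reals List.
From Coquelicot Require Import Coquelicot.
Open Scope R_scope.

Definition nonempty_compact (A : R -> Prop) : Prop :=
  (exists y, A y) /\ compact A.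

Definition point_set_dist (a : R) (B : R -> Prop) : Rbar :=
  Glb_Rbar (fun t => exists b, B b /\ t = Rabs (a - b)).

(** Hausdorff distance:
    max (sup_{a in A} d(a,B), sup_{b in B} d(b,A)),
    written as the sup of the union of the two families of values. *)
Definition hausdorff_dist (A B : R -> Prop) : Rbar :=
  Lub_Rbar (fun t => (exists a, A a /\ point_set_dist a B = Finite t)
                  \/ (exists b, B b /\ point_set_dist b A = Finite t)).

Definition hausdorff_continuous_on (a b : R) (f : R -> R -> Prop) : Prop :=
  forall x, a <= x <= b -> forall eps, 0 < eps ->
    exists delta, 0 < delta /\
      forall y, a <= y <= b -> Rabs (x - y) < delta ->
        Rbar_lt (hausdorff_dist (f x) (f y)) (Finite eps).

Definition graph_of (a b : R) (f : R -> R -> Prop) (p : R * R) : Prop :=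
  a <= fst p <= b /\ f (fst p) (snd p).

Definition delta_set (G : R * R -> Prop) (t : R) : Prop :=
  exists p q, G p /\ G q /\ t = Rabs (fst p - fst q) + Rabs (snd p - snd q).

Definition dist2 (p q : R * R) : R :=
  sqrt ((fst p - fst q) ^ 2 + (snd p - snd q) ^ 2).
Definition dist1 (x y : R) : R := Rabs (x - y).

Definition covered_by {X : Type} (d : X -> X -> R) (E : X -> Prop)
  (r : R) (n : nat) : Prop :=
  exists l : list X, length l = n /\
    forall x, E x -> exists c, In c l /\ d x c <= r.

Definition assouad_admissible {X : Type} (d : X -> X -> R) (F : X -> Prop)
  (s : R) : Prop :=
  0 <= s /\ exists C, 0 < C /\
    forall x r R0, F x -> 0 < r -> r < R0 ->
      exists n, covered_by d (fun y => F y /\ d x y <= R0) r n /\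
                INR n <= C * Rpower (R0 / r) s.

(** Assouad dimension: infimum of admissible exponents (+oo if none). *)
Definition assouad_dim {X : Type} (d : X -> X -> R) (F : X -> Prop) : Rbar :=
  Glb_Rbar (assouad_admissible d F).

(* Main.v *)
Require Import Defs.
From Stdlib Require Import Reals Lra Lia List Classical ZArith.
From Coquelicot Require Import Coquelicot.
Open Scope R_scope.

Lemma nat_unbounded (x : R) : exists n : nat, x < INR n.
Proof.
  destruct (archimed x) as [H1 H2].
  destruct (Z.le_gt_cases 0 (up x)) as [Hz|Hz].
  - exists (Z.to_nat (up x)). rewrite INR_IZR_INZ, Z2Nat.id; [lra|lia].
  - exists 0%nat. simpl. apply IZR_lt in Hz. lra.
Qed.

Lemma Rpower_pos' x y : 0 < Rpower x y.
Proof. unfold Rpower; apply exp_pos. Qed.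

Lemma cover_fuel (r : R) : 0 < r -> forall n : nat, forall u v, u <= v -> v - u < 2 * r * INR n ->
  exists l : list R, INR (length l) <= (v - u) / (2 * r) + 1 /\
    forall y, u <= y <= v -> exists c, In c l /\ Rabs (y - c) <= r.
Proof.
  intros Hr n. induction n as [|n IH]; intros u v Huv0 Huv.
  - simpl in Huv. lra.
  - destruct (Rle_lt_dec (v - u) (2 * r)) as [Hs|Hs].
    + exists (u + r :: nil). split.
      * simpl. assert (0 <= (v-u)/(2*r)) by (apply Rdiv_le_0_compat; lra). lra.
      * intros y Hy. exists (u + r). split; [left; auto|]. apply Rabs_le; lra.
    + destruct (IH (u + 2 * r) v) as [l [Hl Hc]]; [lra| rewrite S_INR in Huv; lra |].
      exists (u + r :: l). split.
      * simpl length. rewrite S_INR.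
        assert ((v - (u + 2 * r)) / (2 * r) = (v - u)/(2*r) - 1) by (field; lra). lra.
      * intros y Hy. destruct (Rle_lt_dec y (u + 2 * r)).
        -- exists (u + r). split; [left; auto|]. apply Rabs_le; lra.
        -- destruct (Hc y) as [c [Hc1 Hc2]]; [lra|]. exists c; split; [right; auto|auto].
Qed.

Lemma cover_ball (x r R0 : R) : 0 < r -> r < R0 ->
  exists l : list R, INR (length l) <= 2 * (R0 / r) /\
    forall y, Rabs (x - y) <= R0 -> exists c, In c l /\ Rabs (y - c) <= r.
Proof.
  intros Hr HR.
  destruct (nat_unbounded ((2 * R0) / (2 * r))) as [n Hn].
  destruct (cover_fuel r Hr n (x - R0) (x + R0)) as [l [Hl Hc]]; [lra| |].
  { apply (Rmult_lt_compat_l (2 * r)) in Hn; [|lra].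
    replace (2 * r * (2 * R0 / (2 * r))) with (2 * R0) in Hn by (field; lra). lra. }
  exists l. split.
  - replace ((x + R0 - (x - R0)) / (2 * r)) with (R0 / r) in Hl by (field; lra).
    assert (1 < R0 / r). { apply (Rmult_lt_reg_r r); [lra|]. field_simplify; lra. }
    lra.
  - intros y Hy. apply Hc. apply Rabs_le_between in Hy. lra.
Qed.

Definition psd (y0 : R) (B : R -> Prop) : R := real (point_set_dist y0 B).

Lemma psd_spec y0 B : (exists b, B b) ->
  point_set_dist y0 B = Finite (psd y0 B) /\
  (forall b, B b -> psd y0 B <= Rabs (y0 - b)) /\
  (forall e, 0 < e -> exists b, B b /\ Rabs (y0 - b) < psd y0 B + e).
Proof.
  intros [b0 Hb0]. unfold psd, point_set_dist.
  destruct (Glb_Rbar_correct (fun t => exists b, B b /\ t = Rabs (y0 - b))) as [Hlb Hgr].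
  assert (H0 : Rbar_le (Finite 0) (Glb_Rbar (fun t => exists b, B b /\ t = Rabs (y0 - b)))).
  { apply Hgr. intros t [b [_ ->]]. simpl. apply Rabs_pos. }
  assert (H1 : Rbar_le (Glb_Rbar (fun t => exists b, B b /\ t = Rabs (y0 - b))) (Finite (Rabs (y0 - b0)))).
  { apply Hlb. exists b0; auto. }
  destruct (Glb_Rbar (fun t => exists b, B b /\ t = Rabs (y0 - b))) as [m| |] eqn:Hm;
    simpl in H0, H1; try contradiction.
  simpl. split; [reflexivity|]. split.
  - intros b Hb. specialize (Hlb (Rabs (y0 - b))). simpl in Hlb. apply Hlb. exists b; auto.
  - intros e He. apply NNPP. intro Hn.
    assert (Hl : Rbar_le (Finite (m + e)) (Finite m)).
    { apply Hgr. intros t [b [Hb ->]]. simpl. apply Rnot_lt_le. intro Hc. apply Hn. exists b; auto. }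
    simpl in Hl. lra.
Qed.

Lemma hd_close A B eps : (exists b, B b) -> Rbar_lt (hausdorff_dist A B) (Finite eps) ->
  forall a, A a -> exists b, B b /\ Rabs (a - b) < eps.
Proof.
  intros HB Hh a Ha. destruct (psd_spec a B HB) as [Heq [_ Hinf]].
  destruct (Lub_Rbar_correct (fun t => (exists a, A a /\ point_set_dist a B = Finite t)
                  \/ (exists b, B b /\ point_set_dist b A = Finite t))) as [Hub _].
  assert (Hm := Hub (psd a B) (or_introl (ex_intro _ a (conj Ha Heq)))).
  unfold hausdorff_dist in Hh.
  destruct (Lub_Rbar _) as [l| |]; simpl in Hm, Hh; try contradiction.
  destruct (Hinf (eps - psd a B)) as [b [Hb Hb']]; [lra|]. exists b; split; auto; lra.
Qed.

Lemma hd_close' A B eps : (exists a, A a) -> Rbar_lt (hausdorff_dist A B) (Finite eps) ->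
  forall b, B b -> exists a, A a /\ Rabs (b - a) < eps.
Proof.
  intros HA Hh b Hb. destruct (psd_spec b A HA) as [Heq [_ Hinf]].
  destruct (Lub_Rbar_correct (fun t => (exists a, A a /\ point_set_dist a B = Finite t)
                  \/ (exists b, B b /\ point_set_dist b A = Finite t))) as [Hub _].
  assert (Hm := Hub (psd b A) (or_intror (ex_intro _ b (conj Hb Heq)))).
  unfold hausdorff_dist in Hh.
  destruct (Lub_Rbar _) as [l| |]; simpl in Hm, Hh; try contradiction.
  destruct (Hinf (eps - psd b A)) as [a [Ha Ha']]; [lra|]. exists a; split; auto; lra.
Qed.

Lemma psd_lip_half y0 A B eps : (exists a, A a) -> (exists b, B b) ->
  (forall a, A a -> exists b, B b /\ Rabs (a - b) < eps) ->
  psd y0 B - eps <= psd y0 A.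
Proof.
  intros HA HB Hc.
  destruct (psd_spec y0 A HA) as [_ [_ HinfA]].
  destruct (psd_spec y0 B HB) as [_ [HlbB _]].
  apply Rnot_lt_le. intro Hn.
  destruct (HinfA (psd y0 B - eps - psd y0 A)) as [a [Ha Ha']]; [lra|].
  destruct (Hc a Ha) as [b [Hb Hb']].
  specialize (HlbB b Hb).
  assert (Rabs (y0 - b) <= Rabs (y0 - a) + Rabs (a - b)).
  { replace (y0 - b) with ((y0 - a) + (a - b)) by ring. apply Rabs_triang. }
  lra.
Qed.

Lemma psd_lip y0 A B eps : (exists a, A a) -> (exists b, B b) ->
  Rbar_lt (hausdorff_dist A B) (Finite eps) ->
  Rabs (psd y0 A - psd y0 B) <= eps.
Proof.
  intros HA HB Hh.
  assert (H1 := psd_lip_half y0 A B eps HA HB (hd_close A B eps HB Hh)).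
  assert (H2 := psd_lip_half y0 B A eps HB HA (hd_close' A B eps HA Hh)).
  apply Rabs_le; lra.
Qed.

Lemma psd_attain y0 B : (exists b, B b) -> compact B -> exists y, B y /\ Rabs (y0 - y) = psd y0 B.
Proof.
  intros HB Hc. destruct (psd_spec y0 B HB) as [_ [Hlb Hinf]].
  set (m := psd y0 B) in *.
  assert (Hm0 : 0 <= m).
  { apply Rnot_lt_le. intro Hneg. destruct (Hinf (- m)) as [b [_ Hb]]; [lra|].
    assert (0 <= Rabs (y0 - b)) by apply Rabs_pos. lra. }
  apply NNPP. intro Hn.
  assert (Hp : ~ B (y0 + m)).
  { intro H. apply Hn. exists (y0 + m). split; auto.
    replace (y0 - (y0 + m)) with (- m) by ring. rewrite Rabs_Ropp. apply Rabs_right.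
    lra. }
  assert (Hq : ~ B (y0 - m)).
  { intro H. apply Hn. exists (y0 - m). split; auto.
    replace (y0 - (y0 - m)) with m by ring. apply Rabs_right.
    lra. }
  assert (Hcl := compact_P2 B Hc).
  destruct (Hcl (y0 + m) Hp) as [d1 Hd1].
  destruct (Hcl (y0 - m) Hq) as [d2 Hd2].
  destruct (Hinf (Rmin d1 d2)) as [b [Hb Hb']].
  { apply Rmin_pos; apply cond_pos. }
  assert (Hm := Hlb b Hb).
  assert (Rmin d1 d2 <= d1) by apply Rmin_l. assert (Rmin d1 d2 <= d2) by apply Rmin_r.
  destruct (Rle_lt_dec y0 b).
  - apply (Hd1 b); auto. unfold disc. rewrite Rabs_minus_sym in Hb', Hm.
    rewrite Rabs_right in Hb', Hm by lra. apply Rabs_def1; lra.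
  - apply (Hd2 b); auto. unfold disc.
    rewrite Rabs_right in Hb', Hm by lra. apply Rabs_def1; lra.
Qed.

Lemma psd_nonneg y0 B : (exists b, B b) -> 0 <= psd y0 B.
Proof.
  intros HB. destruct (psd_spec y0 B HB) as [_ [_ Hinf]].
  apply Rnot_lt_le. intro Hneg. destruct (Hinf (- psd y0 B)) as [b [_ Hb]]; [lra|].
  assert (0 <= Rabs (y0 - b)) by apply Rabs_pos. lra.
Qed.

Definition clamp (a b x : R) := Rmax a (Rmin b x).

Lemma clamp_in a b x : a <= b -> a <= clamp a b x <= b.
Proof. intros. unfold clamp, Rmax, Rmin. repeat destruct Rle_dec; lra. Qed.

Lemma clamp_lip a b x y : a <= b -> Rabs (clamp a b x - clamp a b y) <= Rabs (x - y).
Proof.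
  intros. unfold clamp, Rmax, Rmin. repeat destruct Rle_dec; unfold Rabs; repeat destruct Rcase_abs; lra.
Qed.

Lemma clamp_id a b x : a <= x <= b -> clamp a b x = x.
Proof. intros. unfold clamp, Rmax, Rmin. repeat destruct Rle_dec; lra. Qed.

Lemma delta_interval a b f : a < b ->
  (forall x, a <= x <= b -> nonempty_compact (f x)) -> hausdorff_continuous_on a b f ->
  forall t, 0 < t < b - a -> delta_set (graph_of a b f) t.
Proof.
  intros Hab Hf Hc t Ht.
  destruct (Hf a ltac:(lra)) as [[y0 Hy0] _].
  set (g := fun x => clamp a b x - a + psd y0 (f (clamp a b x)) - t).
  assert (Hne : forall x, exists y, f (clamp a b x) y).
  { intro x. apply (Hf (clamp a b x) (clamp_in a b x ltac:(lra))). }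
  assert (Hg : continuity g).
  { intro x0. unfold continuity_pt, continue_in, limit1_in, limit_in. simpl. unfold R_dist.
    intros eps He.
    destruct (Hc (clamp a b x0) (clamp_in a b x0 ltac:(lra)) (eps/2) ltac:(lra)) as [d [Hd Hd']].
    exists (Rmin d (eps/2)). split; [apply Rmin_pos; lra|].
    intros x [_ Hx].
    assert (Hl := clamp_lip a b x x0 ltac:(lra)).
    assert (Rmin d (eps/2) <= d) by apply Rmin_l. assert (Rmin d (eps/2) <= eps/2) by apply Rmin_r.
    assert (Hh := Hd' (clamp a b x) (clamp_in a b x ltac:(lra))
                 ltac:(rewrite Rabs_minus_sym; lra)).
    assert (Hp := psd_lip y0 _ _ _ (Hne x0) (Hne x) Hh).
    unfold g.
    replace (clamp a b x - a + psd y0 (f (clamp a b x)) - t -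
      (clamp a b x0 - a + psd y0 (f (clamp a b x0)) - t)) with
      ((clamp a b x - clamp a b x0) + (psd y0 (f (clamp a b x)) - psd y0 (f (clamp a b x0)))) by ring.
    eapply Rle_lt_trans; [apply Rabs_triang|]. rewrite Rabs_minus_sym in Hp. lra. }
  assert (Hga : g a < 0).
  { unfold g. rewrite clamp_id by lra.
    destruct (psd_spec y0 (f a) (ex_intro _ y0 Hy0)) as [_ [Hlb _]].
    assert (H1 := Hlb y0 Hy0). rewrite Rminus_diag, Rabs_R0 in H1. lra. }
  assert (Hgb : 0 < g b).
  { unfold g. assert (H1 := psd_nonneg y0 _ (Hne b)). rewrite clamp_id in * by lra. lra. }
  destruct (IVT g a b Hg Hab Hga Hgb) as [z [_ Hz]].
  destruct (Hf (clamp a b z) (clamp_in a b z ltac:(lra))) as [Hn Hcomp].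
  destruct (psd_attain y0 _ Hn Hcomp) as [y [Hy Hyd]].
  exists (a, y0), (clamp a b z, y). unfold graph_of; simpl. split; [split; [lra|auto]|].
  split; [split; [apply clamp_in; lra|auto]|].
  assert (Hi := clamp_in a b z ltac:(lra)).
  rewrite Hyd. rewrite Rabs_minus_sym, Rabs_right by lra. unfold g in Hz. lra.
Qed.

Lemma adm1_R E : assouad_admissible dist1 E 1.
Proof.
  split; [lra|]. exists 2. split; [lra|].
  intros x r R0 Ex Hr HR.
  destruct (cover_ball x r R0 Hr HR) as [l [Hl Hc]].
  exists (length l). split.
  - exists l. split; auto. intros y [_ Hy]. apply Hc. exact Hy.
  - rewrite Rpower_1; [lra|]. apply Rdiv_lt_0_compat; lra.
Qed.

Lemma dist2_vert p q : fst p = fst q -> dist2 p q = Rabs (snd p - snd q).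
Proof.
  intros H. unfold dist2. rewrite H.
  replace ((fst q - fst q) ^ 2 + (snd p - snd q) ^ 2) with (Rsqr (snd p - snd q)) by (unfold Rsqr; ring).
  apply sqrt_Rsqr_abs.
Qed.

Lemma adm1_vert a f : assouad_admissible dist2 (graph_of a a f) 1.
Proof.
  split; [lra|]. exists 2. split; [lra|].
  intros x r R0 Ex Hr HR.
  destruct (cover_ball (snd x) r R0 Hr HR) as [l [Hl Hc]].
  exists (length (map (fun c => (a, c)) l)). split.
  - exists (map (fun c => (a, c)) l). split; auto. intros y [Ey Hy].
    destruct Ex as [Ex _]. destruct Ey as [Ey _].
    rewrite dist2_vert in Hy by lra.
    destruct (Hc (snd y) Hy) as [c [Hc1 Hc2]].
    exists (a, c). split; [apply in_map; auto|].
    rewrite dist2_vert by (simpl; lra). simpl. exact Hc2.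
  - rewrite length_map. rewrite Rpower_1; [lra|]. apply Rdiv_lt_0_compat; lra.
Qed.

Lemma count_lemma (l : list R) r h u : 0 < r -> 2 * r < h -> forall m,
  (forall k, (k <= m)%nat -> exists c, In c l /\ Rabs (u + INR k * h - c) <= r) ->
  (S m <= length l)%nat.
Proof.
  intros Hr Hh m Hm.
  assert (Hex : exists lc, length lc = S m /\ NoDup lc /\ incl lc l /\
     forall c, In c lc -> exists k, (k <= m)%nat /\ Rabs (u + INR k * h - c) <= r).
  { induction m as [|m IH].
    - destruct (Hm 0%nat (le_n _)) as [c [Hc1 Hc2]].
      exists (c :: nil). split; [reflexivity|]. split; [constructor; [intros []|constructor]|].
      split; [intros x [<-|[]]; auto|]. intros c' [<-|[]]. exists 0%nat; split; auto.
    - destruct IH as [lc [H1 [H2 [H3 H4]]]]; [intros k Hk; apply Hm; lia|].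
      destruct (Hm (S m) (le_n _)) as [c [Hc1 Hc2]].
      exists (c :: lc). split; [simpl; lia|]. split.
      + constructor; auto. intro Hin. destruct (H4 c Hin) as [k [Hk Hk']].
        assert (INR k <= INR m) by (apply le_INR; lia). rewrite S_INR in Hc2.
        apply Rabs_le_between in Hc2. apply Rabs_le_between in Hk'.
        assert (0 < h) by lra.
        assert (INR k * h <= INR m * h) by (apply Rmult_le_compat_r; lra).
        lra.
      + split; [intros x [<-|Hx]; auto|].
        intros c' [<-|Hc']; [exists (S m); split; auto|].
        destruct (H4 c' Hc') as [k [Hk Hk']]. exists k; split; [lia|auto]. }
  destruct Hex as [lc [H1 [H2 [H3 _]]]]. rewrite <- H1. apply NoDup_incl_length; auto.
Qed.

Lemma power_growth (s K : R) : s < 1 -> 0 < K ->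
  exists m : nat, K * Rpower (INR (S m)) s < INR (S m).
Proof.
  intros Hs HK.
  set (T := Rpower K (1 / (1 - s))).
  assert (HT : 0 < T) by apply Rpower_pos'.
  destruct (nat_unbounded (Rmax T 1)) as [N HN].
  assert (T <= Rmax T 1) by apply Rmax_l. assert (1 <= Rmax T 1) by apply Rmax_r.
  destruct N as [|m]; [simpl in HN; lra|]. exists m.
  set (x := INR (S m)) in *.
  assert (H1 : Rpower T (1 - s) < Rpower x (1 - s)) by (apply Rlt_Rpower_l; lra).
  unfold T in H1. rewrite Rpower_mult in H1.
  replace (1 / (1 - s) * (1 - s)) with 1 in H1 by (field; lra).
  rewrite Rpower_1 in H1 by lra.
  assert (Hx : x = Rpower x (1 - s) * Rpower x s).
  { rewrite <- Rpower_plus. replace (1 - s + s) with 1 by ring. rewrite Rpower_1; lra. }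
  assert (0 < Rpower x s) by apply Rpower_pos'.
  rewrite Hx at 2. apply Rmult_lt_compat_r; auto.
Qed.

Lemma delta_lower a b f : a < b ->
  (forall x, a <= x <= b -> nonempty_compact (f x)) -> hausdorff_continuous_on a b f ->
  forall s, assouad_admissible dist1 (delta_set (graph_of a b f)) s -> 1 <= s.
Proof.
  intros Hab Hf Hc s [Hs0 [C [HC Hadm]]].
  apply Rnot_lt_le. intro Hs.
  set (L := b - a).
  set (K := C * Rpower 3 s).
  assert (HK : 0 < K) by (unfold K; assert (0 < Rpower 3 s) by apply Rpower_pos'; nra).
  destruct (power_growth s K Hs HK) as [m Hm].
  set (N := INR (S m)) in *.
  assert (HN : 1 <= N) by (unfold N; rewrite S_INR; assert (0 <= INR m) by apply pos_INR; lra).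
  destruct (Hf a ltac:(lra)) as [[y0 Hy0] _].
  assert (HD0 : delta_set (graph_of a b f) 0).
  { exists (a, y0), (a, y0). unfold graph_of; simpl. repeat split; try lra; auto.
    rewrite !Rminus_diag, Rabs_R0. ring. }
  set (r := L / (3 * N)).
  assert (Hr : 0 < r) by (unfold r, L; apply Rdiv_lt_0_compat; lra).
  assert (HrL : r < L).
  { unfold r. apply (Rmult_lt_reg_r (3 * N)); [lra|]. field_simplify; unfold L; nra. }
  destruct (Hadm 0 r L HD0 Hr HrL) as [n [[l [Hl Hcov]] Hn]].
  set (h := L / N).
  assert (Hh : 2 * r < h).
  { unfold r, h. apply (Rmult_lt_reg_r (3 * N)); [lra|]. field_simplify; unfold L; nra. }
  assert (Hcnt := count_lemma l r h 0 Hr Hh m).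
  assert (Hle : (S m <= n)%nat).
  { rewrite <- Hl. apply Hcnt. intros k Hk.
    assert (HkN : INR k < N) by (unfold N; apply lt_INR; lia).
    assert (Hk0 : 0 <= INR k) by apply pos_INR.
    assert (Hhk : 0 <= INR k * h < L).
    { unfold h. split; [apply Rmult_le_pos; [lra|apply Rdiv_le_0_compat; unfold L; lra]|].
      apply (Rmult_lt_reg_r N); [lra|]. field_simplify; [|lra]. unfold L; nra. }
    destruct (Hcov (0 + INR k * h)) as [c [Hc1 Hc2]].
    { split.
      - destruct (Rle_lt_or_eq_dec 0 (INR k * h) (proj1 Hhk)) as [Hp|Hp].
        + apply (delta_interval a b f Hab Hf Hc). unfold L in Hhk. lra.
        + rewrite <- Hp. replace (0 + 0) with 0 by ring. exact HD0.
      - unfold dist1. rewrite Rabs_left1 by lra. lra. }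
    exists c. split; auto. }
  apply le_INR in Hle. fold N in Hle.
  replace (L / r) with (3 * N) in Hn by (unfold r; field; unfold L; lra).
  rewrite <- Rpower_mult_distr in Hn by lra.
  unfold K in Hm. lra.
Qed.

Theorem theorem4p4 (a b : R) (f : R -> R -> Prop) :
  a <= b ->
  (forall x, a <= x <= b -> nonempty_compact (f x)) ->
  hausdorff_continuous_on a b f ->
  Rbar_lt (Finite 1) (assouad_dim dist2 (graph_of a b f)) ->
  assouad_dim dist1 (delta_set (graph_of a b f)) = Finite 1.
Proof.
  intros Hab Hf Hc Hdim.
  destruct (Rle_lt_or_eq_dec a b Hab) as [Hlt|Heq].
  - unfold assouad_dim. apply is_glb_Rbar_unique. split.
    + intros s Hs. simpl. exact (delta_lower a b f Hlt Hf Hc s Hs).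
    + intros bnd Hb. apply Hb. apply adm1_R.
  - exfalso. subst b. unfold assouad_dim in Hdim.
    destruct (Glb_Rbar_correct (assouad_admissible dist2 (graph_of a a f))) as [Hlb _].
    assert (H1 := Hlb 1 (adm1_vert a f)).
    destruct (Glb_Rbar _); simpl in *; lra.
Qed.
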